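(* Let $\mathfrak{n}$ be the real $7$-dimensional Lie algebra with basis $e_1,\dots,e_7$ whose nonzero brackets (up to antisymmetry) are $[e_1,e_2]=e_4$, $[e_1,e_4]=e_5$, $[e_1,e_5]=e_7$, $[e_2,e_3]=e_6+e_7$, $[e_2,e_4]=e_6$. Then $\mathfrak{n}$ is an Einstein nilradical.
   Context: A real nilpotent Lie algebra $\mathfrak{n}$ is called an Einstein nilradical if it admits an inner product such that the left-invariant Riemannian metric it defines on the simply connected nilpotent Lie group with Lie algebra $\mathfrak{n}$ is a nilsoliton, i.e. its Ricci operator satisfies $\mathrm{Ric}=c\,\mathrm{Id}+D$ for some $c\in\mathbb{R}$ and some derivation $D$ of $\mathfrak{n}$. Brackets of basis elements not listed are zero. *)

(* Defs.v *)
From HB Require Import structures.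
From mathcomp Require Import all_boot all_order all_algebra.
From mathcomp Require Import reals.
Set Implicit Arguments. Unset Strict Implicit. Unset Printing Implicit Defensive.
Import Order.TTheory GRing.Theory Num.Theory.
Local Open Scope ring_scope.

Section MetricLie.
Variables (R : realType) (n : nat).

(* Vectors of the n-dimensional Lie algebra are row vectors of coordinates
   w.r.t. the fixed basis e_0, ..., e_(n-1). *)
Definition lbr (C : 'I_n -> 'I_n -> 'rV[R]_n) (x y : 'rV[R]_n) : 'rV[R]_n :=
  \sum_(i < n) \sum_(j < n) (x 0 i * y 0 j) *: C i j.

Definition ip (G : 'M[R]_n) (x y : 'rV[R]_n) : R := (x *m G *m y^T) 0 0.

Definition is_inner_product (G : 'M[R]_n) : Prop :=
  G^T = G /\ forall x : 'rV[R]_n, x != 0 -> 0 < ip G x x.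

Definition orthonormal_basis (G : 'M[R]_n) (X : 'I_n -> 'rV[R]_n) : Prop :=
  forall i j, ip G (X i) (X j) = (i == j)%:R.

(* Ricci form of the left-invariant metric on a nilpotent Lie group, computed
   in an orthonormal basis X (standard formula, e.g. Lauret):
   ric(x,y) = -1/2 sum_{i,j} <[x,X_i],X_j><[y,X_i],X_j>
              + 1/4 sum_{i,j} <[X_i,X_j],x><[X_i,X_j],y>. *)
Definition ric_form C G (X : 'I_n -> 'rV[R]_n) (x y : 'rV[R]_n) : R :=
  - (1/2) * \sum_(i < n) \sum_(j < n)
        ip G (lbr C x (X i)) (X j) * ip G (lbr C y (X i)) (X j)
  + (1/4) * \sum_(i < n) \sum_(j < n)
        ip G (lbr C (X i) (X j)) x * ip G (lbr C (X i) (X j)) y.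

(* Ricci operator: the G-symmetric operator with <Ric x, y> = ric(x,y). *)
Definition ricci_op C G (X : 'I_n -> 'rV[R]_n) (x : 'rV[R]_n) : 'rV[R]_n :=
  \sum_(k < n) ric_form C G X x (X k) *: X k.

Definition is_derivation C (D : 'M[R]_n) : Prop :=
  forall x y, lbr C x y *m D = lbr C (x *m D) y + lbr C x (y *m D).

Definition nilsoliton C G : Prop :=
  exists X : 'I_n -> 'rV[R]_n, orthonormal_basis G X /\
  exists (c : R) (D : 'M[R]_n), is_derivation C D /\
    forall x, ricci_op C G X x = c *: x + x *m D.

Definition Einstein_nilradical C : Prop :=
  exists G : 'M[R]_n, is_inner_product G /\ nilsoliton C G.

End MetricLie.

(* The 7-dimensional example; e k is e_(k+1) of the paper (0-indexed). *)
Definition e7 (R : realType) (k : nat) : 'rV[R]_7 := delta_mx 0 (inord k).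

Definition C7 (R : realType) (i j : 'I_7) : 'rV[R]_7 :=
  match nat_of_ord i, nat_of_ord j with
  | 0, 1 => e7 R 3
  | 1, 0 => - e7 R 3
  | 0, 3 => e7 R 4
  | 3, 0 => - e7 R 4
  | 0, 4 => e7 R 6
  | 4, 0 => - e7 R 6
  | 1, 2 => e7 R 5 + e7 R 6
  | 2, 1 => - (e7 R 5 + e7 R 6)
  | 1, 3 => e7 R 5
  | 3, 1 => - e7 R 5
  | _, _ => 0
  end.

(* Main.v *)
Require Import Defs.
From HB Require Import structures.
From mathcomp Require Import all_boot all_order all_algebra.
From mathcomp Require Import reals.
From mathcomp Require Import ring lra.
From Stdlib Require Import PeanoNat.
Set Implicit Arguments. Unset Strict Implicit. Unset Printing Implicit Defensive.
Import Order.TTheory GRing.Theory Num.Theory.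
Local Open Scope ring_scope.

Ltac ord7 i := case: i => [[|[|[|[|[|[|[|?]]]]]]] ?] //.



Lemma lbrDl (R : realType) n (C : 'I_n -> 'I_n -> 'rV[R]_n) x y z :
  lbr C (x + y) z = lbr C x z + lbr C y z.
Proof.
rewrite /lbr -big_split /=; apply: eq_bigr => i _.
rewrite -big_split /=; apply: eq_bigr => j _.
by rewrite !mxE mulrDl scalerDl.
Qed.

Lemma lbrZl (R : realType) n (C : 'I_n -> 'I_n -> 'rV[R]_n) a x z :
  lbr C (a *: x) z = a *: lbr C x z.
Proof.
rewrite /lbr scaler_sumr; apply: eq_bigr => i _.
rewrite scaler_sumr; apply: eq_bigr => j _.
by rewrite !mxE scalerA mulrA.
Qed.

Lemma lbrDr (R : realType) n (C : 'I_n -> 'I_n -> 'rV[R]_n) x y z :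
  lbr C z (x + y) = lbr C z x + lbr C z y.
Proof.
rewrite /lbr -big_split /=; apply: eq_bigr => i _.
rewrite -big_split /=; apply: eq_bigr => j _.
by rewrite !mxE mulrDr scalerDl.
Qed.

Lemma lbrZr (R : realType) n (C : 'I_n -> 'I_n -> 'rV[R]_n) a x z :
  lbr C z (a *: x) = a *: lbr C z x.
Proof.
rewrite /lbr scaler_sumr; apply: eq_bigr => i _.
rewrite scaler_sumr; apply: eq_bigr => j _.
by rewrite !mxE scalerA mulrCA.
Qed.

Lemma lbr0r (R : realType) n (C : 'I_n -> 'I_n -> 'rV[R]_n) z : lbr C z 0 = 0.
Proof. by have := lbrZr C 0 0 z; rewrite !scale0r. Qed.
Lemma lbr0l (R : realType) n (C : 'I_n -> 'I_n -> 'rV[R]_n) z : lbr C 0 z = 0.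
Proof. by have := lbrZl C 0 0 z; rewrite !scale0r. Qed.

Lemma lbr_sumr (R : realType) n (C : 'I_n -> 'I_n -> 'rV[R]_n) z (F : 'I_n -> 'rV[R]_n) :
  lbr C z (\sum_(k < n) F k) = \sum_(k < n) lbr C z (F k).
Proof. exact: (big_morph _ (fun x y => lbrDr C x y z) (lbr0r C z)). Qed.

Lemma lbr_suml (R : realType) n (C : 'I_n -> 'I_n -> 'rV[R]_n) z (F : 'I_n -> 'rV[R]_n) :
  lbr C (\sum_(k < n) F k) z = \sum_(k < n) lbr C (F k) z.
Proof. exact: (big_morph _ (fun x y => lbrDl C x y z) (lbr0l C z)). Qed.

Lemma ipDl (R : realType) n (G : 'M[R]_n) x y z : ip G (x + y) z = ip G x z + ip G y z.
Proof. by rewrite /ip !mulmxDl mxE. Qed.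
Lemma ipZl (R : realType) n (G : 'M[R]_n) a x z : ip G (a *: x) z = a * ip G x z.
Proof. by rewrite /ip -!scalemxAl mxE. Qed.
Lemma ipDr (R : realType) n (G : 'M[R]_n) x y z : ip G z (x + y) = ip G z x + ip G z y.
Proof. by rewrite /ip linearD /= mulmxDr mxE. Qed.
Lemma ipZr (R : realType) n (G : 'M[R]_n) a x z : ip G z (a *: x) = a * ip G z x.
Proof. by rewrite /ip linearZ /= -scalemxAr mxE. Qed.
Lemma ip0l (R : realType) n (G : 'M[R]_n) z : ip G 0 z = 0.
Proof. by have := ipZl G 0 0 z; rewrite scale0r mul0r. Qed.
Lemma ip_suml (R : realType) n (G : 'M[R]_n) z (F : 'I_n -> 'rV[R]_n) :
  ip G (\sum_(k < n) F k) z = \sum_(k < n) ip G (F k) z.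
Proof. exact: (big_morph _ (fun x y => ipDl G x y z) (ip0l G z)). Qed.



Definition fv (R : realType) (i : 'I_7) : 'rV[R]_7 :=
  match nat_of_ord i with
  | 2 => e7 R 2 - (2/5) *: e7 R 3
  | 5 => e7 R 5 + (3/4) *: e7 R 6
  | k => e7 R k end.

Definition gv (R : realType) (i : 'I_7) : R :=
  match nat_of_ord i with
  | 0 => 3 | 1 => 9 | 2 => 3/5 | 3 => 15/11 | 4 => 3/11 | 5 => 13/22
  | _ => 8/121 end.

Definition Gent (R : realType) (i j : nat) : R :=
  match i, j with
  | 0, 0 => 3 | 1, 1 => 9
  | 2, 2 => 9/11 | 2, 3 => 6/11 | 3, 2 => 6/11 | 3, 3 => 15/11
  | 4, 4 => 3/11
  | 5, 5 => 76/121 | 5, 6 => -6/121 | 6, 5 => -6/121 | 6, 6 => 8/121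
  | _, _ => 0 end.

Definition Gm (R : realType) : 'M[R]_7 := \matrix_(i, j) Gent R i j.

Lemma ip_coord (R : realType) n (G : 'M[R]_n) x y :
  ip G x y = \sum_(j < n) (\sum_(i < n) x 0 i * G i j) * y 0 j.
Proof.
rewrite /ip !mxE; apply: eq_bigr => j _; rewrite !mxE; congr (_ * _).
Qed.

Lemma e7E (R : realType) (k : nat) (i : 'I_1) (m : 'I_7) : (k < 7)%N -> (e7 R k) i m = (nat_of_ord m == k)%:R.
Proof. by move=> hk; rewrite /e7 mxE [i]ord1 eqxx /= -val_eqE /= inordK. Qed.



Lemma ip_delta (R : realType) n (G : 'M[R]_n) a b :
  ip G (delta_mx 0 a) (delta_mx 0 b) = G a b.
Proof. by rewrite /ip -rowE trmx_delta -colE !mxE. Qed.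

Lemma ip_e7 (R : realType) (G : 'M[R]_7) a b : (a < 7)%N -> (b < 7)%N ->
  ip G (e7 R a) (e7 R b) = G (inord a) (inord b).
Proof. by move=> _ _; rewrite ip_delta. Qed.

Lemma Gm_e7 (R : realType) a b : (a < 7)%N -> (b < 7)%N ->
  ip (Gm R) (e7 R a) (e7 R b) = Gent R a b.
Proof. by move=> ha hb; rewrite ip_e7 // mxE !inordK. Qed.

Lemma ipNl (R : realType) n (G : 'M[R]_n) x z : ip G (- x) z = - ip G x z.
Proof. by rewrite -scaleN1r ipZl mulN1r. Qed.
Lemma ipNr (R : realType) n (G : 'M[R]_n) x z : ip G z (- x) = - ip G z x.
Proof. by rewrite -scaleN1r ipZr mulN1r. Qed.

Lemma ip_fv (R : realType) (i j : 'I_7) : ip (Gm R) (fv R i) (fv R j) = (i == j)%:R * gv R i.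
Proof.
ord7 i; ord7 j; rewrite /fv /gv /=.
all: rewrite ?(ipDl, ipDr, ipZl, ipZr, ipNl, ipNr) ?Gm_e7 //=.
all: by field.
Qed.





Lemma lbr_delta (R : realType) n (C : 'I_n -> 'I_n -> 'rV[R]_n) a b :
  lbr C (delta_mx 0 a) (delta_mx 0 b) = C a b.
Proof.
rewrite /lbr (bigD1 a) //=.
rewrite [X in _ + X]big1 ?addr0; last first.
  move=> i hi; rewrite big1 // => j _.
  by rewrite !mxE (negbTE hi) /= ?(mul0r, mulr0n, scale0r).
rewrite (bigD1 b) //= [X in _ + X]big1 ?addr0; last first.
  move=> j hj; rewrite !mxE (negbTE hj) /= ?andbF /=.
  by rewrite ?(mulr0, mulr0n, scale0r).
by rewrite !mxE !eqxx /= mulr1 scale1r.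
Qed.

Lemma lbr_e7 (R : realType) a b : (a < 7)%N -> (b < 7)%N ->
  lbr (@C7 R) (e7 R a) (e7 R b) = @C7 R (inord a) (inord b).
Proof. by move=> _ _; rewrite lbr_delta. Qed.

Lemma lbrNl (R : realType) n (C : 'I_n -> 'I_n -> 'rV[R]_n) x z : lbr C (- x) z = - lbr C x z.
Proof. by rewrite -scaleN1r lbrZl scaleN1r. Qed.
Lemma lbrNr (R : realType) n (C : 'I_n -> 'I_n -> 'rV[R]_n) x z : lbr C z (- x) = - lbr C z x.
Proof. by rewrite -scaleN1r lbrZr scaleN1r. Qed.

Definition beta (R : realType) (i j k : 'I_7) : R :=
  match nat_of_ord i, nat_of_ord j, nat_of_ord k with
  | 0, 1, 3 => 1 | 1, 0, 3 => -1
  | 0, 2, 4 => -(2/5) | 2, 0, 4 => 2/5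
  | 0, 3, 4 => 1 | 3, 0, 4 => -1
  | 0, 4, 6 => 1 | 4, 0, 6 => -1
  | 1, 2, 5 => 3/5 | 2, 1, 5 => -(3/5)
  | 1, 2, 6 => 11/20 | 2, 1, 6 => -(11/20)
  | 1, 3, 5 => 1 | 3, 1, 5 => -1
  | 1, 3, 6 => -(3/4) | 3, 1, 6 => 3/4
  | _, _, _ => 0 end.

Lemma lbr_fv (R : realType) (i j : 'I_7) :
  lbr (@C7 R) (fv R i) (fv R j) = \sum_(k < 7) beta R i j k *: fv R k.
Proof.
rewrite !big_ord_recr big_ord0 /=.
ord7 i; ord7 j; rewrite /fv /beta /=.
all: rewrite ?(lbrDl, lbrDr, lbrZl, lbrZr, lbrNl, lbrNr) ?lbr_e7 // /C7 ?inordK //=.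
all: apply/rowP => m; rewrite !mxE; ord7 m; rewrite /= -?val_eqE /= ?inordK //=.
all: by field.
Qed.






Definition wv (R : realType) (i : 'I_7) : R :=
  match nat_of_ord i with 0 => 1 | 1 => 2 | 2 => 3 | 3 => 3 | 4 => 4 | _ => 5 end.
Definition cc (R : realType) : R := -(89/594).
Definition lam (R : realType) : R := 23/594.

Definition Tv (R : realType) (a k : 'I_7) : R :=
  -(1/2) * \sum_(i < 7) \sum_(j < 7) ((gv R i)^-1 * (gv R j)^-1 *
      ((beta R a i j * gv R j) * (beta R k i j * gv R j)))
  + (1/4) * \sum_(i < 7) \sum_(j < 7) ((gv R i)^-1 * (gv R j)^-1 *
      ((beta R i j a * gv R a) * (beta R i j k * gv R k))).

Lemma sum7 (R : realType) (F : 'I_7 -> R) : \sum_(i < 7) F i =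
  F (@Ordinal 7 0 isT) + F (@Ordinal 7 1 isT) + F (@Ordinal 7 2 isT) + F (@Ordinal 7 3 isT)
  + F (@Ordinal 7 4 isT) + F (@Ordinal 7 5 isT) + F (@Ordinal 7 6 isT).
Proof.
rewrite !big_ord_recr big_ord0 /= add0r.
by repeat congr (_ + _); congr F; apply: val_inj.
Qed.

Definition dlt (R : realType) (a k : 'I_7) : R :=
  if Nat.eqb a k then cc R + lam R * wv R a else 0.

Lemma Tv_val (R : realType) (a k : 'I_7) : (gv R k)^-1 * Tv R a k = dlt R a k.
Proof.
rewrite /Tv !sum7.
ord7 a; ord7 k; cbv beta iota delta [beta gv wv cc lam nat_of_ord dlt Nat.eqb].
all: by field.
Qed.





Definition sq (R : realType) (i : 'I_7) : R := (Num.sqrt (gv R i))^-1.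
Definition Xb (R : realType) (i : 'I_7) : 'rV[R]_7 := sq R i *: fv R i.
Definition Dm (R : realType) : 'M[R]_7 := diag_mx (\row_i (lam R * wv R i)).

Lemma gv_gt0 (R : realType) i : 0 < gv R i.
Proof. ord7 i; rewrite /gv /=; lra. Qed.

Lemma sqK (R : realType) i : sq R i * sq R i = (gv R i)^-1.
Proof. by rewrite /sq -invfM -expr2 sqr_sqrtr // ltW // gv_gt0. Qed.

Lemma Lt (R : realType) (i j k : 'I_7) :
  ip (Gm R) (lbr (@C7 R) (fv R i) (fv R j)) (fv R k) = beta R i j k * gv R k.
Proof.
rewrite lbr_fv ip_suml (bigD1 k) //= [X in _ + X]big1 ?addr0; last first.
  by move=> l hl; rewrite ipZl ip_fv (negbTE hl) mul0r mulr0.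
by rewrite ipZl ip_fv eqxx mul1r.
Qed.

Lemma ric_fv (R : realType) (a k : 'I_7) :
  ric_form (@C7 R) (Gm R) (Xb R) (fv R a) (Xb R k) = sq R k * Tv R a k.
Proof.
rewrite /ric_form /Tv [RHS]mulrDr (mulrCA (sq R k)) (mulrCA (sq R k)).
congr (_ * _ + _ * _).
  rewrite mulr_sumr; apply: eq_bigr => i _.
  rewrite mulr_sumr; apply: eq_bigr => j _.
  rewrite /Xb !(lbrZl, lbrZr, ipZl, ipZr) !Lt -(sqK R i) -(sqK R j); ring.
rewrite mulr_sumr; apply: eq_bigr => i _.
rewrite mulr_sumr; apply: eq_bigr => j _.
rewrite /Xb !(lbrZl, lbrZr, ipZl, ipZr) !Lt -(sqK R i) -(sqK R j); ring.
Qed.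

Lemma ricci_fv (R : realType) (a : 'I_7) :
  ricci_op (@C7 R) (Gm R) (Xb R) (fv R a) = (cc R + lam R * wv R a) *: fv R a.
Proof.
rewrite /ricci_op.
have E : forall k, ric_form (@C7 R) (Gm R) (Xb R) (fv R a) (Xb R k) *: Xb R k
    = dlt R a k *: fv R k.
  move=> k; rewrite ric_fv /Xb scalerA -Tv_val -sqK; congr (_ *: _); ring.
rewrite (eq_bigr _ (fun k _ => E k)) (bigD1 a) //= [X in _ + X]big1 ?addr0.
  by rewrite /dlt Nat.eqb_refl.
move=> k hk; rewrite /dlt.
have -> : Nat.eqb a k = false.
  apply/Nat.eqb_neq => h; move/eqP: hk; apply; apply: val_inj => /=; by rewrite h.
by rewrite scale0r.
Qed.

Lemma fvD (R : realType) (a : 'I_7) : fv R a *m Dm R = (lam R * wv R a) *: fv R a.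
Proof.
apply/rowP => m; rewrite /Dm mul_mx_diag !mxE.
ord7 a; ord7 m; rewrite /fv /wv /= !mxE /= -?val_eqE /= ?inordK //=.
all: ring.
Qed.





Lemma C7D (R : realType) (i j : 'I_7) :
  @C7 R i j *m Dm R = (lam R * (wv R i + wv R j)) *: @C7 R i j.
Proof.
apply/rowP => m; rewrite /Dm mul_mx_diag !mxE.
ord7 i; ord7 j; rewrite /C7 /wv /=.
all: ord7 m; rewrite ?mxE /= -?val_eqE /= ?inordK //=.
all: ring.
Qed.

Lemma derivC7 (R : realType) : is_derivation (@C7 R) (Dm R).
Proof.
move=> x y.
rewrite /lbr mulmx_suml -big_split /=; apply: eq_bigr => i _.
rewrite mulmx_suml -big_split /=; apply: eq_bigr => j _.
rewrite -scalemxAl C7D scalerA -scalerDl; congr (_ *: _).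
rewrite /Dm !mul_mx_diag !mxE; ring.
Qed.

Lemma ric_lin (R : realType) n C G (X : 'I_n -> 'rV[R]_n) a x y z :
  ric_form C G X (a *: x + y) z = a * ric_form C G X x z + ric_form C G X y z.
Proof.
rewrite /ric_form.
have E1 : \sum_(i < n) \sum_(j < n) ip G (lbr C (a *: x + y) (X i)) (X j) * ip G (lbr C z (X i)) (X j)
  = a * (\sum_(i < n) \sum_(j < n) ip G (lbr C x (X i)) (X j) * ip G (lbr C z (X i)) (X j))
    + \sum_(i < n) \sum_(j < n) ip G (lbr C y (X i)) (X j) * ip G (lbr C z (X i)) (X j).
  rewrite mulr_sumr -big_split /=; apply: eq_bigr => i _.
  rewrite mulr_sumr -big_split /=; apply: eq_bigr => j _.
  rewrite lbrDl lbrZl ipDl ipZl; ring.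
have E2 : \sum_(i < n) \sum_(j < n) ip G (lbr C (X i) (X j)) (a *: x + y) * ip G (lbr C (X i) (X j)) z
  = a * (\sum_(i < n) \sum_(j < n) ip G (lbr C (X i) (X j)) x * ip G (lbr C (X i) (X j)) z)
    + \sum_(i < n) \sum_(j < n) ip G (lbr C (X i) (X j)) y * ip G (lbr C (X i) (X j)) z.
  rewrite mulr_sumr -big_split /=; apply: eq_bigr => i _.
  rewrite mulr_sumr -big_split /=; apply: eq_bigr => j _.
  rewrite ipDr ipZr; ring.
rewrite E1 E2; ring.
Qed.

Lemma ricci_lin (R : realType) n C G (X : 'I_n -> 'rV[R]_n) a x y :
  ricci_op C G X (a *: x + y) = a *: ricci_op C G X x + ricci_op C G X y.
Proof.
rewrite /ricci_op scaler_sumr -big_split /=; apply: eq_bigr => k _.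
by rewrite ric_lin scalerDl scalerA.
Qed.

Definition Pn (R : realType) (x : 'rV[R]_7) : Prop :=
  ricci_op (@C7 R) (Gm R) (Xb R) x = cc R *: x + x *m Dm R.

Lemma Pn_lin (R : realType) a x y : Pn x -> Pn y -> Pn (a *: x + y :> 'rV[R]_7).
Proof.
rewrite /Pn => hx hy; rewrite ricci_lin hx hy.
rewrite mulmxDl -scalemxAl !scalerDr !scalerA (mulrC (cc R) a).
by rewrite addrACA.
Qed.

Lemma Pn0 (R : realType) : Pn (0 : 'rV[R]_7).
Proof.
rewrite /Pn scaler0 mul0mx addr0.
have := ricci_lin (@C7 R) (Gm R) (Xb R) 1 0 0.
rewrite !scale1r !addr0 => /(congr1 (fun v => v - ricci_op (@C7 R) (Gm R) (Xb R) 0)).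
by rewrite addrK subrr => <-.
Qed.

Lemma Pn_fv (R : realType) a : Pn (fv R a).
Proof. by rewrite /Pn ricci_fv fvD scalerDl. Qed.

Lemma delta_fv (R : realType) (a : 'I_7) : (delta_mx 0 a : 'rV[R]_7) = fv R a +
  (if nat_of_ord a == 2 then (2/5) *: fv R (@Ordinal 7 3 isT)
   else if nat_of_ord a == 5 then (-(3/4)) *: fv R (@Ordinal 7 6 isT) else 0).
Proof.
apply/rowP => m; rewrite !mxE.
ord7 a; ord7 m; rewrite /fv /= !mxE /= -?val_eqE /= ?inordK //=.
all: ring.
Qed.

Lemma Pn_delta (R : realType) (a : 'I_7) : Pn (delta_mx 0 a : 'rV[R]_7).
Proof.
rewrite delta_fv; case: ifP => _; last case: ifP => _.
- by rewrite addrC; apply: Pn_lin; apply: Pn_fv.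
- by rewrite addrC; apply: Pn_lin; apply: Pn_fv.
- by rewrite addr0; apply: Pn_fv.
Qed.

Lemma Pn_all (R : realType) (x : 'rV[R]_7) : Pn x.
Proof.
rewrite (row_sum_delta x); apply: big_ind.
- exact: Pn0.
- by move=> u v hu hv; rewrite -[u]scale1r; apply: Pn_lin.
- move=> i _; rewrite -[_ *: _]addr0; apply: Pn_lin; [exact: Pn_delta | exact: Pn0].
Qed.





Lemma sum7v (V : zmodType) (F : 'I_7 -> V) : \sum_(i < 7) F i =
  F (@Ordinal 7 0 isT) + F (@Ordinal 7 1 isT) + F (@Ordinal 7 2 isT) + F (@Ordinal 7 3 isT)
  + F (@Ordinal 7 4 isT) + F (@Ordinal 7 5 isT) + F (@Ordinal 7 6 isT).
Proof.
rewrite !big_ord_recr big_ord0 /= add0r.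
by repeat congr (_ + _); congr F; apply: val_inj.
Qed.

Definition yq (R : realType) (x : 'rV[R]_7) (a : 'I_7) : R :=
  match nat_of_ord a with
  | 0 => x 0 (@Ordinal 7 0 isT) | 1 => x 0 (@Ordinal 7 1 isT) | 2 => x 0 (@Ordinal 7 2 isT)
  | 3 => x 0 (@Ordinal 7 3 isT) + 2/5 * x 0 (@Ordinal 7 2 isT)
  | 4 => x 0 (@Ordinal 7 4 isT) | 5 => x 0 (@Ordinal 7 5 isT)
  | _ => x 0 (@Ordinal 7 6 isT) - 3/4 * x 0 (@Ordinal 7 5 isT) end.

Lemma ip_sos (R : realType) (x : 'rV[R]_7) :
  ip (Gm R) x x = \sum_(a < 7) gv R a * yq x a ^+ 2.
Proof.
rewrite ip_coord !sum7 /Gm !mxE.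
cbv beta iota delta [Gent gv yq nat_of_ord].
by field.
Qed.

Lemma ip_pos (R : realType) (x : 'rV[R]_7) : x != 0 -> 0 < ip (Gm R) x x.
Proof.
move=> hx; rewrite ip_sos.
have : ~~ [forall a, yq x a == 0].
  apply: contra hx => /forallP h.
  have h0 := eqP (h (@Ordinal 7 0 isT)); have h1 := eqP (h (@Ordinal 7 1 isT)).
  have h2 := eqP (h (@Ordinal 7 2 isT)); have h3 := eqP (h (@Ordinal 7 3 isT)).
  have h4 := eqP (h (@Ordinal 7 4 isT)); have h5 := eqP (h (@Ordinal 7 5 isT)).
  have h6 := eqP (h (@Ordinal 7 6 isT)).
  rewrite /yq /= in h0 h1 h2 h3 h4 h5 h6.
  have e3 : x 0 (@Ordinal 7 3 isT) = 0 by lra.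
  have e6 : x 0 (@Ordinal 7 6 isT) = 0 by lra.
  apply/eqP; rewrite (row_sum_delta x) sum7v h0 h1 h2 e3 h4 h5 e6.
  by rewrite !scale0r !addr0.
rewrite negb_forall => /existsP [a ha].
rewrite (bigD1 a) //=.
have h1 : 0 < gv R a * yq x a ^+ 2.
  by apply: mulr_gt0; [exact: gv_gt0 | rewrite exprn_even_gt0 // ha orbT].
have h2 : 0 <= \sum_(i < 7 | i != a) gv R i * yq x i ^+ 2.
  by apply: sumr_ge0 => i _; apply: mulr_ge0; [exact: (ltW (gv_gt0 R i)) | exact: sqr_ge0].
lra.
Qed.

Theorem mainTheorem14 (R : realType) : Einstein_nilradical (@C7 R).
Proof.
exists (Gm R); split.
  split; last exact: ip_pos.
  apply/matrixP => i j; rewrite !mxE; ord7 i; ord7 j.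
exists (Xb R); split.
  move=> i j; rewrite /Xb ipZl ipZr ip_fv.
  case: (eqVneq i j) => [<-|hij].
    by rewrite /= ?mulr1n mul1r mulrA sqK mulVf // lt0r_neq0 // gv_gt0.
  by rewrite /= ?mulr0n mul0r !mulr0.
exists (cc R), (Dm R); split; first exact: derivC7.
by move=> x; exact: Pn_all.
Qed.
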